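(* Let $\mu\in\mathrm{i}\mathbb{R}\setminus\{0\}$ be such that $\mu^{-1}D^{-1}+I^{(-1)}$ is nonsingular, and let $z(\mu):=e_m^{\mathsf T}\left(\mu^{-1}D^{-1}+I^{(-1)}\right)^{-1}e_m$. Then $|z(\mu)-1|=1$.
   Context: $M\ge1$, $m=2M+1$, $h>0$, $T>0$. Sinc time points $t_j=\dfrac{T e^{jh}}{1+e^{jh}}$, $j=-M,\dots,M$. $D=h\,\mathrm{diag}\big(t_{-M}(T-t_{-M})/T,\dots,t_M(T-t_M)/T\big)$. $I^{(-1)}\in\mathbb{R}^{m\times m}$ is the Toeplitz matrix with entries $I^{(-1)}_{l,j}=\frac12+\int_0^{l-j}\frac{\sin(\pi t)}{\pi t}\,dt$. $e_m=(1,\dots,1)^{\mathsf T}\in\mathbb{R}^m$. *)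

(* Defs.v *)
From Stdlib Require Import Reals.
From Coquelicot Require Hierarchy RInt.
From HB Require Import structures.
From mathcomp Require Import all_boot all_order all_algebra.
From mathcomp Require Import Rstruct.
From mathcomp.real_closed Require Import complex.

Unset Printing Implicit Defensive.
Import Order.TTheory GRing.Theory Num.Theory.
Local Open Scope ring_scope.

Definition sinc (t : R) : R :=
  if Req_EM_T t 0 then 1 else Rdiv (sin (Rmult PI t)) (Rmult PI t).

(* oriented integral  int_0^x sinc(t) dt  (equals -int_x^0 for x < 0) *)
Definition Si (x : R) : R := @Coquelicot.RInt.RInt Coquelicot.Hierarchy.R_CompleteNormedModule sinc 0 x.

Definition RC (x : R) : R[i] := (x%:C)%C.

(* m = 2M+1 ; index i : 'I_m corresponds to j = i - M in {-M,...,M} *)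
Definition msz (M : nat) : nat := (2 * M).+1.

Definition tpt (M : nat) (h T : R) (i : 'I_(msz M)) : R :=
  let x := (i%:R - M%:R) * h in T * exp x / (1 + exp x).

Definition Dmat (M : nat) (h T : R) : 'M[R[i]]_(msz M) :=
  \matrix_(l, j) (if l == j then
     RC (h * (tpt M h T l * (T - tpt M h T l) / T)) else 0).

Definition Imat (M : nat) : 'M[R[i]]_(msz M) :=
  \matrix_(l, j) RC (2^-1 + Si ((l : nat)%:R - (j : nat)%:R)).

Definition evec (M : nat) : 'cV[R[i]]_(msz M) := const_mx 1.

Definition Amat (M : nat) (h T : R) (mu : R[i]) : 'M[R[i]]_(msz M) :=
  mu^-1 *: invmx (Dmat M h T) + Imat M.

Definition zval (M : nat) (h T : R) (mu : R[i]) : R[i] :=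
  ((evec M)^T *m invmx (Amat M h T mu) *m evec M) ord0 ord0.

(* Main.v *)
Require Import Defs.
From Stdlib Require Import Reals Lra.
From mathcomp Require Import all_boot all_order all_algebra.
From mathcomp Require Import Rstruct.
From mathcomp.real_closed Require Import complex.
From Coquelicot Require Import Coquelicot.
Import Order.TTheory GRing.Theory Num.Theory.

Module SincPart.
Local Open Scope R_scope.
Lemma sinc0 : sinc 0 = 1.
Proof. rewrite /sinc. by destruct (Rstruct.Req_EM_T 0 0). Qed.
Lemma sinc_cont0 : continuous sinc 0.
Proof.
have L : is_lim sinc 0 1.
  have H := is_lim_comp_lin (fun x => sin x / x) PI 0 0 1.
  simpl in H. rewrite Rmult_0_r Rplus_0_r in H.
  have H2 := H is_lim_sinc_0 PI_neq0.
  eapply is_lim_ext_loc; last exact H2.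
  exists (mkposreal 1 Rlt_0_1) => y _ Hy.
  rewrite /sinc Rplus_0_r. by case: (Rstruct.Req_EM_T y 0).
apply/filterlim_locally => eps.
apply is_lim_spec in L. have [d Hd] := L eps.
exists d => y Hy.
case: (Req_EM_T y 0) => [->|ny].
  apply: ball_center.
have := Hd y Hy ny. by rewrite sinc0.
Qed.
Lemma sinc_cont y : continuous sinc y.
Proof.
case: (Req_EM_T y 0) => [->|ny]; first exact: sinc_cont0.
apply: (continuous_ext_loc _ (fun t => sin (PI * t) / (PI * t))).
  have Hp : 0 < Rabs y by apply Rabs_pos_lt.
  exists (mkposreal _ Hp) => t Ht.
  rewrite /sinc. destruct (Rstruct.Req_EM_T t 0) as [e|]; last by [].
  exfalso. move: Ht. rewrite e /ball /= /AbsRing_ball /abs /minus /plus /opp /=.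
  rewrite Rplus_0_l Rabs_Ropp. lra.
apply continuity_pt_filterlim.
apply continuity_pt_div.
- apply: (continuity_pt_comp (fun t => PI * t) sin); last by apply continuity_sin.
  apply continuity_pt_mult; [apply continuity_pt_const; by move=> ? ?|apply continuity_pt_id].
- apply continuity_pt_mult; [apply continuity_pt_const; by move=> ? ?|apply continuity_pt_id].
- move=> H. apply Rmult_integral in H. case: H => H. exact: PI_neq0 H. exact: ny H.
Qed.
Lemma sincE t : t <> 0 -> sinc t = sin (PI * t) / (PI * t).
Proof. move=> nt. rewrite /sinc. by case: (Rstruct.Req_EM_T t 0). Qed.
Lemma sinc_even y : sinc (- y) = sinc y.
Proof.
case: (Req_EM_T y 0) => [->|ny]; first by rewrite Ropp_0.
rewrite !sincE //; last by move=> h; apply ny; lra.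
rewrite -Ropp_mult_distr_r sin_neg /Rdiv -Ropp_inv_permute; first ring.
move=> H. apply Rmult_integral in H. case: H => H. exact: PI_neq0 H. exact: ny H.
Qed.
Lemma Si_odd x : Si (- x) = - Si x.
Proof.
have ex : @ex_RInt R_NormedModule sinc 0 x by apply (@ex_RInt_continuous R_CompleteNormedModule) => z _; apply sinc_cont.
have H := RInt_correct _ _ _ ex.
have H1 : is_RInt sinc (- 0) (- - x) (Si x) by rewrite Ropp_0 Ropp_involutive.
have H2 := is_RInt_comp_opp _ _ _ _ H1.
have H3 : is_RInt (fun y => - sinc y) 0 (- x) (Si x).
  apply: is_RInt_ext H2 => y _. by rewrite sinc_even.
have H4 := is_RInt_opp _ _ _ _ H3.
have H5 : is_RInt sinc 0 (- x) (- Si x).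
  apply: is_RInt_ext H4 => y _ /=. rewrite /opp /=. ring.
exact: is_RInt_unique H5.
Qed.

End SincPart.

From mathcomp Require Import lra ring.
Local Open Scope ring_scope.

Lemma Si_odd (x : R) : Si (- x) = - Si x.
Proof. exact: SincPart.Si_odd. Qed.

Definition ct {m n} (A : 'M[R[i]]_(m, n)) : 'M[R[i]]_(n, m) := (map_mx conjc A)^T.

Lemma ctM m n p (A : 'M[R[i]]_(m, n)) (B : 'M[R[i]]_(n, p)) : ct (A *m B) = ct B *m ct A.
Proof. by rewrite /ct map_mxM trmx_mul. Qed.
Lemma ctD m n (A B : 'M[R[i]]_(m, n)) : ct (A + B) = ct A + ct B.
Proof. by rewrite /ct map_mxD linearD. Qed.
Lemma ctZ m n a (A : 'M[R[i]]_(m, n)) : ct (a *: A) = conjc a *: ct A.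
Proof. by rewrite /ct map_mxZ linearZ. Qed.

Lemma Imat_sym M : Imat M + (Imat M)^T = evec M *m (evec M)^T.
Proof.
apply/matrixP => l j. rewrite !mxE big_ord1 !mxE mulr1 /RC -rmorphD /=.
have E : forall a b : R, Si (b - a) = - Si (a - b).
  by move=> a b; rewrite -Si_odd Ropp_minus_distr.
rewrite E -(rmorph1 (real_complex R)).
congr (real_complex R _). set s := Si _.
change (GRing.add (GRing.add (2^-1) (GRing.opp s)) (GRing.add (2^-1) s) = 1). lra.
Qed.

Lemma ctI M : ct (Imat M) = (Imat M)^T.
Proof. apply/matrixP => l j. by rewrite !mxE conjc_real. Qed.

Lemma ctDm M h T : ct (Dmat M h T) = Dmat M h T.
Proof.
apply/matrixP => l j. rewrite !mxE eq_sym. case: eqP => [->|_].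
  by rewrite conjc_real.
by rewrite conjc0.
Qed.

Lemma ctinvD M h T : ct (invmx (Dmat M h T)) = invmx (Dmat M h T).
Proof. by rewrite /ct map_invmx trmx_inv -/(ct _) ctDm. Qed.

Lemma cte M : ct (evec M) = (evec M)^T.
Proof. apply/matrixP => l j. by rewrite !mxE conjc1. Qed.

Lemma ctA M h T mu : Re mu = 0 ->
  Amat M h T mu + ct (Amat M h T mu) = evec M *m (evec M)^T.
Proof.
move=> Hre.
have Hc : conjc (mu^-1) = - mu^-1.
  have Hm : mu^* = - mu.
    move: Hre; rewrite ReE => /eqP; rewrite mulf_eq0 invr_eq0 pnatr_eq0 orbF addr_eq0.
    move/eqP => E; by rewrite {2}E opprK.
  rewrite conjc_inv -invrN. congr (_^-1). exact: Hm.
rewrite /Amat ctD ctZ Hc ctinvD ctI addrACA scaleNr addrN add0r. exact: Imat_sym.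
Qed.

Lemma cteT M : ct ((evec M)^T) = evec M.
Proof. apply/matrixP => l j. by rewrite !mxE conjc1. Qed.

Theorem mainTheorem6 (M : nat) (h T : R) (mu : R[i]) :
  (1 <= M)%N -> 0 < h -> 0 < T ->
  Re mu = 0 -> mu != 0 ->
  Amat M h T mu \in unitmx ->
  `| zval M h T mu - 1 | = 1.
Proof.
move=> _ _ _ Hre _ HA.
have HAs := ctA M h T mu Hre.
move: HA HAs; set A := Amat M h T mu; set e := evec M => HA HAs.
set x := invmx A *m e.
have Ax : A *m x = e by rewrite /x mulmxA mulmxV // mul1mx.
set Z := e^T *m x.
have zE : zval M h T mu = Z 0 0 by rewrite /zval /Z mulmxA.
have ctZ : ct Z = ct x *m A *m x by rewrite /Z ctM cteT -mulmxA Ax.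
have Z2 : Z = ct x *m ct A *m x by rewrite -ctM Ax cte.
have key : ct Z + Z = ct Z *m Z.
  rewrite {1}ctZ {1}Z2 -mulmxDl -mulmxDr HAs.
  by rewrite /Z ctM cteT !mulmxA.
have H : conjc (Z 0 0) + Z 0 0 = conjc (Z 0 0) * Z 0 0.
  have := congr1 (fun N : 'M[R[i]]_1 => N 0 0) key. by rewrite /= !mxE big_ord1 !mxE.
rewrite zE. move: H. set z := Z 0 0 => H.
have Hs : `|z - 1| ^+ 2 = 1.
  rewrite sqr_normc rmorphB rmorph1.
  have -> : (z - 1) * (conjc z - 1) = conjc z * z - (conjc z + z) + 1.
    ring.
  by rewrite -H subrr add0r.
apply/eqP. by rewrite -sqrp_eq1 // Hs.
Qed.
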